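(* For every integer $r\ge 0$, $\mathrm{LCD}[6r+6,2] < 4r+4$.
   Context: All codes are binary linear codes, i.e. subspaces of $\mathbb{F}_2^n$; an $[n,k,d]$ code is one of length $n$, dimension $k$ and minimum Hamming distance $d$. A linear code $C$ is an LCD code if $C\cap C^\perp=\{0\}$, where $C^\perp$ is the dual with respect to the standard dot product. For positive integers $n\ge k$, $\mathrm{LCD}[n,k]$ denotes the largest $d$ such that there exists a binary $[n,k,d]$ LCD code. *)

(* Defs.v *)
From mathcomp Require Import all_boot all_order all_algebra.
Set Implicit Arguments. Unset Strict Implicit. Unset Printing Implicit Defensive.
Import GRing.Theory.
Local Open Scope ring_scope.

(* Binary vectors of length n are row vectors 'rV['F_2]_n.
   A binary linear [n,k] code is the row space of a k x n generator
   matrix G of rank k (full row rank). *)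

Definition wt n (v : 'rV['F_2]_n) : nat := #|[set i : 'I_n | v 0 i != 0]|.

(* Minimum distance of the code spanned by the rows of G (for linear codes,
   the minimum weight of a nonzero codeword): the largest d <= n such that
   every nonzero codeword has weight >= d. *)
Definition min_dist k n (G : 'M['F_2]_(k, n)) : nat :=
  \max_(d < n.+1 | [forall v : 'rV['F_2]_n,
          ((v <= G)%MS && (v != 0)) ==> (d <= wt v)%N]) d.

(* Dual code: kermx G^T spans { u | u *m G^T = 0 }, i.e. vectors orthogonal
   (standard dot product) to every codeword. *)
Definition is_LCD k n (G : 'M['F_2]_(k, n)) : bool :=
  (G :&: kermx G^T)%MS == 0 :> 'M['F_2]_n.

Definition has_LCD_code n k d : bool :=
  [exists G : 'M['F_2]_(k, n), [&& \rank G == k, is_LCD G & min_dist G == d]].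

Definition LCD n k : nat :=
  \max_(d < n.+1 | has_LCD_code n k d) d.

(* Main.v *)
Require Import Defs.
From mathcomp Require Import all_boot all_order all_algebra.
From mathcomp Require Import zify.
Import GRing.Theory.
Local Open Scope ring_scope.
Lemma F2c (a : 'F_2) : a = 0 \/ a = 1.
Proof. case: a => [[|[|k]]] H; [left|right|]; try by apply/val_inj. by []. Qed.
Lemma h11 : (1 + 1 : 'F_2) = 0.
Proof. by apply/val_inj. Qed.
Lemma loc (a b : 'F_2) : ((a != 0%R) + (b != 0%R) = ((a + b)%R != 0%R) + 2 * ((a*b)%R != 0%R))%N /\
   ((a != 0%R) + (b != 0%R) + ((a + b)%R != 0%R) <= 2)%N.
Proof. case: (F2c a) => ->; case: (F2c b) => ->; rewrite ?h11 ?mulr1 ?mulr0 ?mul0r ?addr0 ?add0r ?oner_neq0 ?eqxx; split; by []. Qed.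
Lemma F2nat k : ((2 * k)%:R : 'F_2) = 0.
Proof. rewrite natrM; have -> : (2%:R : 'F_2) = 0 by apply/val_inj. by rewrite mul0r. Qed.
Lemma F2val (a : 'F_2) : a = (a != 0)%:R.
Proof. by case: (F2c a) => ->; rewrite ?eqxx ?oner_neq0. Qed.
Lemma F2sq (a : 'F_2) : a * a = a.
Proof. by case: (F2c a) => ->; rewrite ?mulr0 ?mulr1. Qed.

Lemma wt_sum n (w : 'rV['F_2]_n) : wt w = (\sum_(i < n) (w 0%R i != 0%R))%N.
Proof.
rewrite /wt -sum1_card big_mkcond /=; apply: eq_bigr => i _; rewrite inE.
by case: (_ != _).
Qed.

Lemma key k (u v : 'rV['F_2]_(6 * k)) :
  (4 * k <= wt u)%N -> (4 * k <= wt v)%N -> (4 * k <= wt (u + v))%N ->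
  [/\ \sum_j u 0 j * v 0 j = 0, \sum_j u 0 j * u 0 j = 0 & \sum_j v 0 j * v 0 j = 0].
Proof.
move=> hu hv huv.
set c := (\sum_(j < 6 * k) ((u 0%R j * v 0%R j)%R != 0%R))%N.
have e1 : (wt u + wt v = wt (u + v) + 2 * c)%N.
  rewrite !wt_sum -big_split /= big_distrr -big_split /=.
  by apply: eq_bigr => j _; rewrite mxE (loc _ _).1.
have e2 : (wt u + wt v + wt (u + v) <= 2 * (6 * k))%N.
  rewrite !wt_sum -!big_split /=.
  apply: (@leq_trans (\sum_(j < 6 * k) 2)%N).
    by apply: leq_sum => j _; rewrite mxE (loc _ _).2.
  by rewrite -[in X in (_ <= X)%N](card_ord (6 * k)) sum_nat_const mulnC.
have ewu : wt u = (2 * (2 * k))%N by lia.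
have ewv : wt v = (2 * (2 * k))%N by lia.
have ec : c = (2 * k)%N by lia.
have sq (w : 'rV['F_2]_(6 * k)) : \sum_j w 0 j * w 0 j = (wt w)%:R :> 'F_2.
  rewrite wt_sum natr_sum; apply: eq_bigr => j _; rewrite F2sq; exact: F2val.
split.
- have -> : \sum_j u 0 j * v 0 j = \sum_j ((u 0 j * v 0 j) != 0)%:R :> 'F_2.
    by apply: eq_bigr => j _; exact: F2val.
  by rewrite -natr_sum -/c ec F2nat.
- by rewrite sq ewu F2nat.
- by rewrite sq ewv F2nat.
Qed.

Lemma md_le {k n} (G : 'M['F_2]_(k,n)) w : (w <= G)%MS -> w != 0 -> (min_dist G <= wt w)%N.
Proof. move=> hw hw0; apply/bigmax_leqP => d /forallP /(_ w) /implyP; apply; by rewrite hw hw0. Qed.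

Theorem proposition2p4 (r : nat) : (LCD (6 * r + 6) 2 < 4 * r + 4)%N.
Proof.
have -> : (6 * r + 6 = 6 * r.+1)%N by lia.
have -> : (4 * r + 4 = (4 * r + 3).+1)%N by lia.
rewrite ltnS; apply/bigmax_leqP => d /existsP [G /and3P [hr hL /eqP <-]].
set u := row 0 G; set v := row 1 G.
have rf : row_free G by [].
have dnz (w : 'rV_2) : w 0 0 != 0 -> w *m G != 0.
  move=> hw; apply/eqP => h; move: hw; have : w *m G = 0 *m G by rewrite mul0mx.
  by move/(row_free_inj rf) ->; rewrite mxE eqxx.
have unz : u != 0.
  by rewrite /u rowE dnz // mxE !eqxx.
have vnz : v != 0.
  rewrite /v rowE; apply/eqP => h.
  have : (delta_mx 0 1 : 'rV_2) *m G = 0 *m G by rewrite mul0mx.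
  by move/(row_free_inj rf)/matrixP/(_ 0 1)/eqP; rewrite !mxE !eqxx.
have uvnz : u + v != 0.
  rewrite /u /v !rowE -mulmxDl dnz // !mxE !eqxx.
  have e : (0 == 1 :> 'I_2) = false by []. by rewrite e.
have us : (u <= G)%MS by apply: row_sub.
have vs : (v <= G)%MS by apply: row_sub.
have uvs : ((u + v)%R <= G)%MS by apply: addmx_sub.
case: (leqP (4 * r.+1) (wt u)) => hu; last by apply: leq_trans (md_le G _ us unz) _; lia.
case: (leqP (4 * r.+1) (wt v)) => hv; last by apply: leq_trans (md_le G _ vs vnz) _; lia.
case: (leqP (4 * r.+1) (wt (u + v))) => huv; last by apply: leq_trans (md_le G _ uvs uvnz) _; lia.
case: (@key r.+1 u v hu hv huv) => e01 e00 e11.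
exfalso.
have gram : G *m G^T = 0.
  apply/matrixP => i j; rewrite !mxE.
  have eu j' : u 0 j' = G 0 j' by rewrite mxE.
  have ev j' : v 0 j' = G 1 j' by rewrite mxE.
  case: i => [[|[|i]]] hi; case: j => [[|[|j]]] hj //.
  - have -> : Ordinal hi = 0 by apply/val_inj.
    have -> : Ordinal hj = 0 by apply/val_inj.
    by apply: etrans _ e00; apply: eq_bigr => l _; rewrite mxE !eu.
  - have -> : Ordinal hi = 0 by apply/val_inj.
    have -> : Ordinal hj = 1 by apply/val_inj.
    by apply: etrans _ e01; apply: eq_bigr => l _; rewrite mxE eu ev.
  - have -> : Ordinal hi = 1 by apply/val_inj.
    have -> : Ordinal hj = 0 by apply/val_inj.
    by apply: etrans _ e01; apply: eq_bigr => l _; rewrite mxE eu ev mulrC.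
  - have -> : Ordinal hi = 1 by apply/val_inj.
    have -> : Ordinal hj = 1 by apply/val_inj.
    by apply: etrans _ e11; apply: eq_bigr => l _; rewrite mxE !ev.
have sk : (G <= kermx G^T)%MS by apply/sub_kermxP.
have h := capmx_idPl sk.
move: hL; rewrite /is_LCD => /eqP hL.
have := congr1 mxrank hL.
by rewrite h mxrank0 (eqP hr).
Qed.
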